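(* Let $q$ be an odd prime power with $q\equiv 1 \pmod 3$ and $q>261$, and let $n=\frac{q+2}{3}$. Then not every element of $\mathbb{F}_q$ is the sum of a $4$-potent and an $n$-potent of $\mathbb{F}_q$; that is, there exists $\gamma\in\mathbb{F}_q$ that cannot be written as $\alpha+\beta$ with $\alpha^n=\alpha$ and $\beta^4=\beta$.
   Context: $\mathbb{F}_q$ denotes the finite field with $q$ elements. For an integer $m>1$, an element $a\in\mathbb{F}_q$ is called an $m$-potent if $a^m=a$. *)

(* Defs.v *)
From mathcomp Require Import all_boot all_algebra all_field.
Set Implicit Arguments. Unset Strict Implicit. Unset Printing Implicit Defensive.
Import GRing.Theory.
Local Open Scope ring_scope.

Definition mpotent (R : pzRingType) (m : nat) (a : R) : Prop := a ^+ m = a.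

(* Main.v *)
Require Import Defs.
From mathcomp Require Import all_boot all_algebra all_field.
From mathcomp Require Import zify ring.
From Stdlib Require Import Classical.
Import GRing.Theory.
Local Open Scope ring_scope.

Section Aux.
Context {F : finFieldType}.
Local Notation q := #|F|.

Lemma natr_card : (q%:R : F) = 0.
Proof.
have H : \sum_(x : F) x = \sum_(x : F) (x + 1) := reindex_inj (addIr 1).
move: H; rewrite big_split /= sumr_const => /eqP.
by rewrite -subr_eq0 opprD addrA subrr sub0r oppr_eq0 => /eqP.
Qed.

Lemma unit_pow (x : F) : x != 0 -> x ^+ q.-1 = 1.
Proof.
move=> nx; have := expf_card x.
have q1 : (0 < q)%N by case: q (finNzRing_gt1 F).
rewrite -{1}(prednK q1) exprS => h.
by apply: (mulfI nx); rewrite mulr1.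
Qed.

Lemma pow_mod (x : F) a : x != 0 -> x ^+ a = x ^+ (a %% q.-1).
Proof.
move=> nx; rewrite {1}(divn_eq a q.-1) exprD mulnC exprM unit_pow // expr1n mul1r //.
Qed.

Lemma exists_nonroot a : (0 < a < q.-1)%N -> exists y : F, (y != 0) && (y ^+ a != 1).
Proof.
case/andP=> a0 aq.
case: (boolP [exists y : F, (y != 0) && (y ^+ a != 1)]) => [/existsP //|/existsPn H]; exfalso.
pose rs := [seq x <- enum F | x != 0].
pose p : {poly F} := 'X^a - 1.
have : (size rs < size p)%N.
  apply: max_poly_roots.
  - by rewrite -size_poly_eq0 /p size_Xn_sub_1.
  - apply/allP=> x; rewrite mem_filter => /andP[nx _].
    have := H x; rewrite nx /= negbK => /eqP hx.
    by rewrite rootE !hornerE hx subrr.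
  - by rewrite filter_uniq // enum_uniq.
rewrite /p size_Xn_sub_1 // ltnS.
have -> : size rs = q.-1.
  rewrite size_filter -(cardC1 (0 : F)) cardE /enum_mem size_filter.
  rewrite (@eq_filter _ _ predT) // filter_predT.
  by apply: eq_count => x; rewrite !inE.
by rewrite leqNgt aq.
Qed.

Lemma q_gt1 : (1 < q)%N. Proof. exact: finNzRing_gt1. Qed.

Lemma natr_predq : ((q.-1)%:R : F) = -1.
Proof.
have : (q%:R : F) = (q.-1)%:R + 1 by rewrite -{1}(prednK (ltnW q_gt1)) mulrSr.
by rewrite natr_card => /eqP; rewrite eq_sym addr_eq0 => /eqP.
Qed.

Definition ps (a : nat) : F := \sum_(x : F) x ^+ a.

Lemma ps_ndvd a : ~~ (q.-1 %| a)%N -> ps a = 0.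
Proof.
move=> nd.
set a' := (a %% q.-1)%N.
have a'0 : (0 < a')%N by rewrite lt0n.
have a'q : (a' < q.-1)%N by rewrite ltn_pmod // -ltnS (prednK (ltnW q_gt1)) q_gt1.
case: (@exists_nonroot a') => [|y /andP[ny hy]]; first by rewrite a'0 a'q.
have: ps a = y ^+ a * ps a.
  rewrite /ps mulr_sumr (reindex_inj (mulfI ny)) /=.
  by apply: eq_bigr => x _; rewrite exprMn.
move/eqP; rewrite -{1}[ps a]mul1r -subr_eq0 -mulrBl mulf_eq0 subr_eq0.
case/orP=> [|/eqP//].
by rewrite eq_sym (pow_mod y a ny) (negbTE hy).
Qed.

Lemma ps_dvd a : (0 < a)%N -> (q.-1 %| a)%N -> ps a = -1.
Proof.
move=> a0 d; rewrite /ps (bigD1 0) //= expr0n (gtn_eqF a0) add0r.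
rewrite (eq_bigr (fun _ => 1)) => [|x nx]; last first.
  by rewrite (pow_mod x a nx) (eqP d) expr0.
rewrite sumr_const -natr_predq -(cardC1 (0 : F)).
by congr (_ %:R); apply: eq_card => x; rewrite !inE.
Qed.

Lemma ps0 : ps 0 = 0.
Proof.
rewrite /ps (eq_bigr (fun _ => 1)) => [|x _]; last by rewrite expr0.
by rewrite sumr_const cardT -cardE natr_card.
Qed.

Lemma bsum a b n (c : F) :
  \sum_(x : F) x ^+ a * (x ^+ b + c) ^+ n =
  \sum_(i < n.+1) (c ^+ i *+ 'C(n, i)) * ps (a + b * (n - i)).
Proof.
under eq_bigr => x _ do rewrite exprDn mulr_sumr.
rewrite exchange_big /=; apply: eq_bigr => i _.
rewrite /ps mulr_sumr; apply: eq_bigr => x _.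
rewrite exprD (exprM x b) mulrnAr mulrnAl; congr (_ *+ _).
move: (x ^+ a) (x ^+ b ^+ (n - i)) (c ^+ i) => u v w.
ring.
Qed.

Lemma bsum_one a b n (c : F) i0 : (i0 <= n)%N -> (0 < a + b * (n - i0))%N ->
  (q.-1 %| a + b * (n - i0))%N ->
  (forall i, (i <= n)%N -> i != i0 -> ~~ (q.-1 %| a + b * (n - i))%N) ->
  \sum_(x : F) x ^+ a * (x ^+ b + c) ^+ n = - (c ^+ i0 *+ 'C(n, i0)).
Proof.
move=> hi0 hpos hd hnd; rewrite bsum.
have hi0' : (i0 < n.+1)%N by [].
rewrite (bigD1 (Ordinal hi0')) //= big1 ?addr0 => [|i hi].
  by rewrite ps_dvd // mulrN1.
rewrite ps_ndvd ?mulr0 //; apply: hnd; first by rewrite -ltnS.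
by apply: contra hi => /eqP hi; apply/eqP/val_inj.
Qed.

Lemma bsum_zero a b n (c : F) :
  (forall i, (i <= n)%N -> ~~ (q.-1 %| a + b * (n - i))%N) ->
  \sum_(x : F) x ^+ a * (x ^+ b + c) ^+ n = 0.
Proof.
move=> hnd; rewrite bsum big1 // => i _.
by rewrite ps_ndvd ?mulr0 //; apply: hnd; rewrite -ltnS.
Qed.

End Aux.

Lemma ndvd2 d X : (0 < X < 2 * d)%N -> X != d -> ~~ (d %| X)%N.
Proof.
move=> /andP[h1 h2] hne; apply/negP => /dvdnP[k hk]; subst X.
case: k h1 h2 hne => [|[|k]] /=; rewrite ?mul0n ?mul1n ?eqxx //.
move=> _ h _; exfalso; move: h; rewrite !mulSn; lia.
Qed.

Lemma ndvd3 e X : ~~ (3 %| X)%N -> ~~ (3 * e %| X)%N.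
Proof. by apply: contra => /(dvdn_trans (dvdn_mulr e (dvdnn 3))). Qed.

Lemma ndvd4 d X : (0 < X < 4 * d)%N -> X != d -> X != 2 * d -> X != 3 * d -> ~~ (d %| X)%N.
Proof.
move=> /andP[h1 h2] n1 n2 n3; apply/negP => /dvdnP[k hk]; subst X.
move: h1 h2 n1 n2 n3; case: k => [|[|[|[|k]]]] //=; rewrite ?mul0n ?mul1n ?eqxx ?(mulnC 2) ?(mulnC 3) ?eqxx //.
move=> _ h; exfalso; move: h; rewrite !mulSn; lia.
Qed.

Lemma sgnE (R : pzRingType) j : (-1 : R) ^+ (j.*2) = 1.
Proof. by rewrite -mul2n exprM sqrrN !expr1n. Qed.

Lemma sgnO (R : pzRingType) j : (-1 : R) ^+ (j.*2.+1) = -1.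
Proof. by rewrite exprS sgnE mulr1. Qed.


Section Om.
Variable F : finFieldType.
Variable e : nat.
Variable w : F.
Hypothesis hq : #|F| = (3 * e).+1.
Hypothesis hw : w ^+ 2 + w + 1 = 0.

Lemma w3 : w ^+ 3 = 1.
Proof.
have : w ^+ 3 - 1 = (w - 1) * (w ^+ 2 + w + 1) by ring.
by rewrite hw mulr0 => /eqP; rewrite subr_eq0 => /eqP.
Qed.

Lemma wn0 : w != 0.
Proof. by apply/eqP => w0; move: w3; rewrite w0 expr0n /= => /eqP; rewrite eq_sym oner_eq0. Qed.

Lemma w_mod n : w ^+ n = w ^+ (n %% 3).
Proof. by rewrite {1}(divn_eq n 3) exprD mulnC exprM w3 expr1n mul1r. Qed.

Lemma zsum n : 1 + w ^+ n + (w ^+ 2) ^+ n = if (3 %| n)%N then 3 else 0.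
Proof.
rewrite -exprM mulnC exprM (w_mod n) /dvdn.
have : (n %% 3 < 3)%N by rewrite ltn_mod.
case: (n %% 3)%N => [|[|[|//]]] _ /=.
- by rewrite expr0 expr1n; ring.
- by rewrite expr1 -hw; ring.
- have -> : (w ^+ 2) ^+ 2 = w * w ^+ 3 by rewrite -exprM -exprS.
  by rewrite w3 mulr1 -hw; ring.
Qed.

Lemma reindex_z (z : F) (h : F -> F) a : z != 0 ->
  \sum_(x : F) x ^+ a * h x = z ^+ a * \sum_(x : F) x ^+ a * h (z * x).
Proof.
move=> nz; rewrite (reindex_inj (mulfI nz)) mulr_sumr; apply: eq_bigr => x _.
by rewrite exprMn mulrA.
Qed.

Definition T a := \sum_(x : F) x ^+ a * (x ^+ 2 + x + 1) ^+ e.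
Definition Z a := \sum_(x : F) x ^+ a * (x ^+ 1 + -1) ^+ e.
Definition SU a := \sum_(x : F) x ^+ a * (x ^+ 3 + -1) ^+ e.

Lemma sumV (z : F) a : z != 0 ->
  \sum_(x : F) x ^+ a * (x ^+ 2 + z * x + z ^+ 2) ^+ e = z ^+ (a + 2 * e) * T a.
Proof.
move=> nz; rewrite (@reindex_z z _ a nz) /T exprD -mulrA; congr (_ * _).
rewrite mulr_sumr; apply: eq_bigr => x _.
have -> : (z * x) ^+ 2 + z * (z * x) + z ^+ 2 = z ^+ 2 * (x ^+ 2 + x + 1) by ring.
by rewrite exprMn -exprM mulrCA.
Qed.

Lemma sumW (z : F) a : z != 0 ->
  \sum_(x : F) x ^+ a * (x - z) ^+ e = z ^+ (a + e) * Z a.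
Proof.
move=> nz; rewrite (@reindex_z z _ a nz) /Z exprD -mulrA; congr (_ * _).
rewrite mulr_sumr; apply: eq_bigr => x _.
have -> : z * x - z = z * (x ^+ 1 + -1) by rewrite expr1; ring.
by rewrite exprMn mulrCA.
Qed.


Definition Mf (x : F) := (x ^+ 3 + -1) ^+ e
  - ((x ^+ 2 + x + 1) ^+ e + (x ^+ 2 + w * x + w ^+ 2) ^+ e
     + (x ^+ 2 + w ^+ 2 * x + (w ^+ 2) ^+ 2) ^+ e)
  + ((x - 1) ^+ e + (x - w) ^+ e + (x - w ^+ 2) ^+ e) - 1.

Lemma w2n0 : w ^+ 2 != 0. Proof. by rewrite expf_neq0 // wn0. Qed.

Lemma SM_split a : \sum_(x : F) x ^+ a * Mf x =
  SU a - (1 + w ^+ (a + 2 * e) + (w ^+ 2) ^+ (a + 2 * e)) * T a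
  + (1 + w ^+ (a + e) + (w ^+ 2) ^+ (a + e)) * Z a - ps a.
Proof.
have pt : forall x : F, x ^+ a * Mf x =
  x ^+ a * (x ^+ 3 + -1) ^+ e
  - (x ^+ a * (x ^+ 2 + x + 1) ^+ e + x ^+ a * (x ^+ 2 + w * x + w ^+ 2) ^+ e
     + x ^+ a * (x ^+ 2 + w ^+ 2 * x + (w ^+ 2) ^+ 2) ^+ e)
  + (x ^+ a * (x - 1) ^+ e + x ^+ a * (x - w) ^+ e + x ^+ a * (x - w ^+ 2) ^+ e)
  - x ^+ a.
  move=> x; rewrite /Mf.
  move: (x ^+ a) ((x ^+ 3 + -1) ^+ e) ((x ^+ 2 + x + 1) ^+ e) ((x ^+ 2 + w * x + w ^+ 2) ^+ e)
    ((x ^+ 2 + w ^+ 2 * x + (w ^+ 2) ^+ 2) ^+ e) ((x - 1) ^+ e) ((x - w) ^+ e) ((x - w ^+ 2) ^+ e).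
  move=> X U V1 V2 V3 W1 W2 W3; ring.
rewrite (eq_bigr _ (fun x _ => pt x)) !big_split /= !sumrN !big_split /=.
rewrite (sumV _ _ wn0) (sumV _ _ w2n0) (sumW _ _ (oner_neq0 F)) (sumW _ _ wn0) (sumW _ _ w2n0).
rewrite expr1n mul1r.
rewrite -/(T a) -/(SU a) -/(ps a).
move: (T a) (Z a) (SU a) (ps a) (w ^+ (a + 2 * e)) ((w ^+ 2) ^+ (a + 2 * e))
  (w ^+ (a + e)) ((w ^+ 2) ^+ (a + e)) => t z u p A B C D.
ring.
Qed.


Definition P3 : {poly F} := 'X^2 + 'X + 1.

Lemma size_P3 : size P3 = 3%N.
Proof.
by rewrite /P3 size_polyDl ?size_polyDl ?size_polyXn ?size_polyX ?size_poly1.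
Qed.

Lemma cR k : (P3 ^+ k)`_0 = 1 /\ (P3 ^+ k)`_1 = k%:R /\
  (P3 ^+ k)`_2 = ('C(k, 2) + k)%:R /\ (P3 ^+ k)`_3 = ('C(k, 3) + k * k.-1)%:R.
Proof.
elim: k => [|k [h0 [h1 [h2 h3]]]].
  by rewrite expr0 !coef1.
have E j : (P3 ^+ k.+1)`_j = (P3 ^+ k)`_j + (if j == 0%N then 0 else (P3 ^+ k)`_j.-1)
   + (if (j < 2)%N then 0 else (P3 ^+ k)`_(j - 2)).
  rewrite exprSr /P3 !mulrDr mulr1 !coefD coefMX coefMXn; ring.
rewrite !E h0 h1 h2 h3 /=; split; first by ring.
split; first by rewrite addr0 natr1.
split; first by rewrite -natrD natr1 binS bin1; congr (_ %:R); lia.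
rewrite -!natrD; congr (_ %:R); rewrite binS; clear E h0 h1 h2 h3; case: k => [|k] //=.
nia.
Qed.


Lemma T_coef a : T a = \sum_(j < (2 * e).+1) (P3 ^+ e)`_j * ps (a + j).
Proof.
have hs : (size (P3 ^+ e) <= (2 * e).+1)%N.
  have := size_exp P3 e; rewrite size_P3 /= mulnC => <-.
  by rewrite leqSpred.
rewrite /T.
have pt : forall x : F, x ^+ a * (x ^+ 2 + x + 1) ^+ e =
   \sum_(j < (2 * e).+1) (P3 ^+ e)`_j * x ^+ (a + j).
  move=> x; have -> : (x ^+ 2 + x + 1) ^+ e = (P3 ^+ e).[x].
    by rewrite horner_exp /P3 !hornerE.
  rewrite (horner_coef_wide _ hs) mulr_sumr; apply: eq_bigr => j _.
  by rewrite exprD mulrCA.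
rewrite (eq_bigr _ (fun x _ => pt x)) exchange_big /=; apply: eq_bigr => j _.
by rewrite /ps mulr_sumr.
Qed.

Lemma T_zero a : (forall j, (j <= 2 * e)%N -> ~~ (#|F|.-1 %| a + j)%N) -> T a = 0.
Proof.
move=> h; rewrite T_coef big1 // => j _.
by rewrite ps_ndvd ?mulr0 //; apply: h; rewrite -ltnS.
Qed.

Lemma T_one a j0 : (j0 <= 2 * e)%N -> (0 < a + j0)%N -> (#|F|.-1 %| a + j0)%N ->
  (forall j, (j <= 2 * e)%N -> j != j0 -> ~~ (#|F|.-1 %| a + j)%N) ->
  T a = - (P3 ^+ e)`_j0.
Proof.
move=> hj0 hpos hd hnd; rewrite T_coef.
have hj0' : (j0 < (2 * e).+1)%N by [].
rewrite (bigD1 (Ordinal hj0')) //= big1 ?addr0 => [|i hi].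
  by rewrite ps_dvd // mulrN1.
rewrite ps_ndvd ?mulr0 //; apply: hnd; first by rewrite -ltnS.
by apply: contra hi => /eqP hi; apply/eqP/val_inj.
Qed.

Lemma T_inv a a' : (0 < a)%N -> (0 < a')%N -> (#|F|.-1 %| a + a' + 2 * e)%N ->
  T a = T a'.
Proof.
move=> a0 a'0 hd; rewrite /T (reindex_inj (can_inj (@invrK F))).
apply: eq_bigr => x _.
have [->|nx] := eqVneq x 0.
  by rewrite invr0 !expr0n (gtn_eqF a0) (gtn_eqF a'0) !mul0r.
have h1 : x ^+ a' * x ^+ (a + 2 * e) = 1.
  by rewrite -exprD (pow_mod _ _ nx) addnA (addnC a') (eqP hd) expr0.
have h2 : x ^+ a' = (x ^-1) ^+ (a + 2 * e).
  by rewrite exprVn; apply: (mulIf (expf_neq0 (a + 2 * e) nx)); rewrite h1 mulVf // expf_neq0.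
have h3 : x^-1 ^+ 2 + x^-1 + 1 = x^-1 ^+ 2 * (x ^+ 2 + x + 1).
  by field.
by rewrite h2 h3 exprMn mulrA -exprM -exprD mulnC.
Qed.


Lemma via_hw (L R K : F) : L - R = K * (w ^+ 2 + w + 1) -> L = R.
Proof. by rewrite hw mulr0 => /eqP; rewrite subr_eq0 => /eqP. Qed.

Lemma Mf_fact x :
  ((x - 1) ^+ e - 1) * ((x - w) ^+ e - 1) * ((x - w ^+ 2) ^+ e - 1) = Mf x.
Proof.
have i1 : (x - 1) * (x - w) * (x - w ^+ 2) = x ^+ 3 + -1.
  by apply: (@via_hw _ _ (1 - w + x * w - x ^+ 2)); ring.
have i2 : (x - w) * (x - w ^+ 2) = x ^+ 2 + x + 1.
  by apply: (@via_hw _ _ (-1 + w - x)); ring.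
have i3 : (x - 1) * (x - w ^+ 2) = x ^+ 2 + w * x + w ^+ 2.
  by apply: (@via_hw _ _ (- x)); ring.
have i4 : (x - 1) * (x - w) = x ^+ 2 + w ^+ 2 * x + (w ^+ 2) ^+ 2.
  by apply: (@via_hw _ _ (w - w ^+ 2 - x)); ring.
rewrite /Mf -i1 -i2 -i3 -i4 !exprMn.
move: ((x - 1) ^+ e) ((x - w) ^+ e) ((x - w ^+ 2) ^+ e) => a1 a2 a3; ring.
Qed.

Definition G (x : F) := (x ^+ e - 1) *
  (((x - 1) ^+ e - 1) * ((x - w) ^+ e - 1) * ((x - w ^+ 2) ^+ e - 1)).

Lemma hd : #|F|.-1 = (3 * e)%N. Proof. by rewrite hq. Qed.


Lemma caseA : (87 <= e)%N -> ~~ odd e -> ~~ (3 %| e)%N -> (2%:R : F) != 0 ->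
  (forall x : F, (x ^+ 4 - x) * G x = 0) -> False.
Proof.
move=> he ev n3 two HP.
have ek : e = (e./2).*2.
  by have := odd_double_half e; rewrite (negbTE ev) /= add0n.
have S0 : \sum_(x : F) x ^+ (2 * e - 7) * ((x ^+ 4 - x) * G x) = 0.
  by rewrite big1 // => x _; rewrite HP mulr0.
have pt : forall x : F, x ^+ (2 * e - 7) * ((x ^+ 4 - x) * G x) =
   x ^+ (3 * e - 3) * Mf x - x ^+ (2 * e - 3) * Mf x
   - x ^+ (3 * e - 6) * Mf x + x ^+ (2 * e - 6) * Mf x.
  move=> x; rewrite /G Mf_fact.
  have E1 : x ^+ (3 * e - 3) = x ^+ (2 * e - 7) * x ^+ 4 * x ^+ e.
    by rewrite -!exprD; congr (_ ^+ _); lia.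
  have E2 : x ^+ (2 * e - 3) = x ^+ (2 * e - 7) * x ^+ 4.
    by rewrite -!exprD; congr (_ ^+ _); lia.
  have E3 : x ^+ (3 * e - 6) = x ^+ (2 * e - 7) * x * x ^+ e.
    by rewrite -exprSr -exprD; congr (_ ^+ _); lia.
  have E4 : x ^+ (2 * e - 6) = x ^+ (2 * e - 7) * x.
    by rewrite -exprSr; congr (_ ^+ _); lia.
  rewrite E1 E2 E3 E4.
  move: (x ^+ (2 * e - 7)) (x ^+ 4) (x ^+ e) (Mf x) => p f E m; ring.
rewrite (eq_bigr _ (fun x _ => pt x)) big_split /= !sumrB !SM_split in S0.
have P1 : forall a, (0 < a < 3 * e)%N -> ps a = 0 :> F.
  move=> a ha; apply: ps_ndvd; rewrite hd; apply: ndvd4; lia.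
rewrite !P1 in S0; try lia.
have Z0 : forall n, ~~ (3 %| n)%N -> 1 + w ^+ n + (w ^+ 2) ^+ n = 0.
  by move=> n hn; rewrite zsum (negbTE hn).
rewrite (Z0 (3 * e - 3 + 2 * e)%N ltac:(lia)) (Z0 (2 * e - 3 + 2 * e)%N ltac:(lia))
  (Z0 (3 * e - 6 + 2 * e)%N ltac:(lia)) (Z0 (2 * e - 6 + 2 * e)%N ltac:(lia))
  (Z0 (3 * e - 3 + e)%N ltac:(lia)) (Z0 (3 * e - 6 + e)%N ltac:(lia)) in S0.
have Zz : forall a, (2 * e - 6 <= a <= 2 * e - 3)%N -> Z a = 0.
  move=> a ha; rewrite /Z bsum_zero // => i hi.
  rewrite hd; apply: ndvd4; lia.
rewrite (Zz (2 * e - 3)%N ltac:(lia)) (Zz (2 * e - 6)%N ltac:(lia)) in S0.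
have U0 : forall a, ~~ (3 %| a)%N -> (a < 3 * e)%N -> SU a = 0.
  move=> a h3a ha; rewrite /SU bsum_zero // => i hi.
  rewrite hd; apply: ndvd3; lia.
rewrite (U0 (2 * e - 3)%N ltac:(lia) ltac:(lia)) (U0 (2 * e - 6)%N ltac:(lia) ltac:(lia)) in S0.
have U1 : SU (3 * e - 3) = e%:R.
  rewrite /SU (@bsum_one _ _ 3 e (-1) (e - 1)); try lia.
  - rewrite bin_sub ?bin1; last lia.
    have -> : (e - 1 = (e./2).-1.*2.+1)%N by lia.
    by rewrite sgnO mulNrn opprK.
  - by rewrite hd; apply/dvdnP; exists 1%N; lia.
  - move=> i hi hne; rewrite hd; apply: ndvd4; lia.
have U2 : SU (3 * e - 6) = - ('C(e, 2))%:R.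
  rewrite /SU (@bsum_one _ _ 3 e (-1) (e - 2)); try lia.
  - rewrite bin_sub; last lia.
    have -> : (e - 2 = (e./2).-1.*2)%N by lia.
    by rewrite sgnE.
  - by rewrite hd; apply/dvdnP; exists 1%N; lia.
  - move=> i hi hne; rewrite hd; apply: ndvd4; lia.
rewrite U1 U2 !mul0r !mulr0 in S0.
have H : (e%:R + ('C(e, 2))%:R : F) = 0 by rewrite -S0; ring.
have hC2 : ('C(e, 2) * 2 = e * e.-1)%N.
  by have := bin_ffact e 2; rewrite ffactnS ffactn1.
have N : (9 * (2 * (e + 'C(e, 2))) = (3 * e) * (3 * e + 3))%N by nia.
move/(congr1 (fun n : nat => n%:R : F)): N.
rewrite natrM natrM natrD H mulr0 mulr0 natrM natrD -hd natr_predq => h.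
have : (2%:R : F) = - (-1 * (-1 + 3%:R)) by ring.
by rewrite -h oppr0 => h2; rewrite h2 eqxx in two.
Qed.


Lemma SU_one a i0 : (0 < e)%N -> (i0 <= e)%N ->
  (a + 3 * (e - i0) = 3 * e \/ a + 3 * (e - i0) = 2 * (3 * e))%N ->
  (forall i, (i <= e)%N -> i != i0 -> (0 < a + 3 * (e - i) < 4 * (3 * e))%N /\
     (a + 3 * (e - i) != 3 * e)%N /\ (a + 3 * (e - i) != 2 * (3 * e))%N /\
     (a + 3 * (e - i) != 3 * (3 * e))%N) ->
  SU a = - ((-1) ^+ i0 *+ 'C(e, i0)).
Proof.
move=> he0 h0 h1 h2; rewrite /SU (@bsum_one _ _ 3 e (-1) i0) //.
- case: h1 => ->; lia.
- by rewrite hd; case: h1 => ->; [exact: dvdnn | exact: dvdn_mull (dvdnn _)].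
- move=> i hi hne; rewrite hd; have [? [? [? ?]]] := h2 i hi hne; exact: ndvd4.
Qed.

Lemma Z_one a i0 : (0 < e)%N -> (i0 <= e)%N ->
  (a + 1 * (e - i0) = 3 * e \/ a + 1 * (e - i0) = 2 * (3 * e))%N ->
  (forall i, (i <= e)%N -> i != i0 -> (0 < a + 1 * (e - i) < 4 * (3 * e))%N /\
     (a + 1 * (e - i) != 3 * e)%N /\ (a + 1 * (e - i) != 2 * (3 * e))%N /\
     (a + 1 * (e - i) != 3 * (3 * e))%N) ->
  Z a = - ((-1) ^+ i0 *+ 'C(e, i0)).
Proof.
move=> he0 h0 h1 h2; rewrite /Z (@bsum_one _ _ 1 e (-1) i0) //.
- case: h1 => ->; lia.
- by rewrite hd; case: h1 => ->; [exact: dvdnn | exact: dvdn_mull (dvdnn _)].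
- move=> i hi hne; rewrite hd; have [? [? [? ?]]] := h2 i hi hne; exact: ndvd4.
Qed.

Lemma Z_zero a : (forall i, (i <= e)%N -> (0 < a + 1 * (e - i) < 4 * (3 * e))%N /\
     (a + 1 * (e - i) != 3 * e)%N /\ (a + 1 * (e - i) != 2 * (3 * e))%N /\
     (a + 1 * (e - i) != 3 * (3 * e))%N) -> Z a = 0.
Proof.
move=> h2; rewrite /Z bsum_zero // => i hi.
rewrite hd; have [? [? [? ?]]] := h2 i hi; exact: ndvd4.
Qed.

Lemma T_zero' a : (forall j, (j <= 2 * e)%N -> (0 < a + j < 4 * (3 * e))%N /\
     (a + j != 3 * e)%N /\ (a + j != 2 * (3 * e))%N /\
     (a + j != 3 * (3 * e))%N) -> T a = 0.
Proof.
move=> h2; apply: T_zero => j hj.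
rewrite hd; have [? [? [? ?]]] := h2 j hj; exact: ndvd4.
Qed.

Lemma caseB : (87 <= e)%N -> ~~ odd e -> (3 %| e)%N -> (2%:R : F) != 0 ->
  (forall x : F, (x ^+ 4 - x) * G x = 0) -> False.
Proof.
move=> he ev d3 two HP.
have ek : e = (e./2).*2.
  by have := odd_double_half e; rewrite (negbTE ev) /= add0n.
have we : w ^+ e = 1 by rewrite w_mod; have -> : (e %% 3 = 0)%N by lia.
have G0 : forall x, G x = 0.
  move=> x; move: (HP x) => /eqP; rewrite mulf_eq0 => /orP[|/eqP//].
  have -> : x ^+ 4 - x = x * (x - 1) * (x - w) * (x - w ^+ 2).
    by apply: (@via_hw _ _ (- x + x * w - x ^+ 2 * w + x ^+ 3)); ring.
  rewrite !mulf_eq0 !subr_eq0 => /orP[/orP[/orP[]|]|] /eqP ->; rewrite /G.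
  - by rewrite sub0r ek sgnE subrr ?mul0r ?mulr0.
  - by rewrite expr1n subrr mul0r.
  - by rewrite we subrr mul0r.
  - by rewrite -exprM mulnC exprM we expr1n subrr mul0r.
set t := (e %/ 6)%N.
have et : e = (6 * t)%N by rewrite /t; lia.
have S0 : \sum_(x : F) (2 * x ^+ (2 * e - 3) + x ^+ (e - 3) + x ^+ 3 - x ^+ (2 * e + 3)) * G x = 0.
  by rewrite big1 // => x _; rewrite G0 mulr0.
have pt : forall x : F, (2 * x ^+ (2 * e - 3) + x ^+ (e - 3) + x ^+ 3 - x ^+ (2 * e + 3)) * G x =
   x ^+ (3 * e - 3) * Mf x + x ^+ (3 * e - 3) * Mf x - x ^+ (2 * e - 3) * Mf x
   - x ^+ (e - 3) * Mf x + x ^+ (e + 3) * Mf x - x ^+ 3 * Mf x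
   - x ^+ (3 * e + 3) * Mf x + x ^+ (2 * e + 3) * Mf x.
  move=> x; rewrite /G Mf_fact.
  have E1 : x ^+ (3 * e - 3) = x ^+ (2 * e - 3) * x ^+ e.
    by rewrite -!exprD; congr (_ ^+ _); lia.
  have E2 : x ^+ (2 * e - 3) = x ^+ (e - 3) * x ^+ e.
    by rewrite -!exprD; congr (_ ^+ _); lia.
  have E3 : x ^+ (e + 3) = x ^+ 3 * x ^+ e.
    by rewrite -!exprD; congr (_ ^+ _); lia.
  have E4 : x ^+ (3 * e + 3) = x ^+ (2 * e + 3) * x ^+ e.
    by rewrite -!exprD; congr (_ ^+ _); lia.
  rewrite E1 E3 E4 E2.
  move: (x ^+ (e - 3)) (x ^+ 3) (x ^+ (2 * e + 3)) (x ^+ e) (Mf x) => p2 x3 p4 E m; ring.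
rewrite (eq_bigr _ (fun x _ => pt x)) !big_split /= !sumrN !SM_split in S0.
have ZSa : forall a, (3 %| a)%N -> 1 + w ^+ (a + 2 * e) + (w ^+ 2) ^+ (a + 2 * e) = 3.
  by move=> a ha; rewrite zsum; have -> : (3 %| a + 2 * e)%N by lia.
have ZSb : forall a, (3 %| a)%N -> 1 + w ^+ (a + e) + (w ^+ 2) ^+ (a + e) = 3.
  by move=> a ha; rewrite zsum; have -> : (3 %| a + e)%N by lia.
rewrite !ZSa in S0; [ | lia ..].
rewrite !ZSb in S0; [ | lia ..].
have Pn : forall a, (0 < a < 4 * (3 * e))%N -> a != (3 * e)%N -> a != (2 * (3 * e))%N ->
   a != (3 * (3 * e))%N -> ps a = 0 :> F.
  by move=> a h1 h2 h3 h4; apply: ps_ndvd; rewrite hd; apply: ndvd4.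
rewrite !Pn in S0; [ | lia ..].
have he0 : (0 < e)%N by lia.
have U1 : SU (3 * e - 3)%N = e%:R.
  rewrite (@SU_one (3 * e - 3)%N (e - 1)%N he0); [ | lia | lia | move=> i hi hne; lia].
  rewrite bin_sub ?bin1; last lia.
  have -> : (e - 1 = (3 * t).-1.*2.+1)%N by lia.
  by rewrite sgnO mulNrn opprK.
have U2 : SU (2 * e - 3)%N = ('C(e, 2 * t + 1))%:R.
  rewrite (@SU_one (2 * e - 3)%N (4 * t - 1)%N he0); [ | lia | lia | move=> i hi hne; lia].
  have -> : (4 * t - 1 = (2 * t - 1).*2.+1)%N by lia.
  rewrite sgnO mulNrn opprK.
  have -> : ((2 * t - 1).*2.+1 = e - (2 * t + 1))%N by lia.
  by rewrite bin_sub //; lia.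
have U3 : SU (e - 3)%N = ('C(e, 2 * t - 1))%:R.
  rewrite (@SU_one (e - 3)%N (2 * t - 1)%N he0); [ | lia | lia | move=> i hi hne; lia].
  have -> : (2 * t - 1 = (t - 1).*2.+1)%N by lia.
  rewrite sgnO mulNrn opprK.
  by have -> : ((t - 1).*2.+1 = 2 * t - 1)%N by lia.
have U4 : SU (e + 3)%N = ('C(e, 2 * t + 1))%:R.
  rewrite (@SU_one (e + 3)%N (2 * t + 1)%N he0); [ | lia | lia | move=> i hi hne; lia].
  have -> : (2 * t + 1 = t.*2.+1)%N by lia.
  rewrite sgnO mulNrn opprK.
  by have -> : (t.*2.+1 = 2 * t + 1)%N by lia.
have U5 : SU 3 = e%:R.
  rewrite (@SU_one 3 1 he0); [ | lia | lia | move=> i hi hne; lia].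
  by rewrite expr1 bin1 mulNrn opprK.
have U6 : SU (3 * e + 3)%N = e%:R.
  rewrite (@SU_one (3 * e + 3)%N 1 he0); [ | lia | lia | move=> i hi hne; lia].
  by rewrite expr1 bin1 mulNrn opprK.
have U7 : SU (2 * e + 3)%N = ('C(e, 2 * t - 1))%:R.
  rewrite (@SU_one (2 * e + 3)%N (4 * t + 1)%N he0); [ | lia | lia | move=> i hi hne; lia].
  have -> : (4 * t + 1 = (2 * t).*2.+1)%N by lia.
  rewrite sgnO mulNrn opprK.
  have -> : ((2 * t).*2.+1 = e - (2 * t - 1))%N by lia.
  by rewrite bin_sub //; lia.
have T1 : T (3 * e - 3)%N = - ('C(e, 3) + e * e.-1)%:R.
  have [_ [_ [_ c3]]] := cR e.
  rewrite -c3 (@T_one _ 3); [ by [] | lia | lia | | ].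
    by rewrite hd; have -> : (3 * e - 3 + 3 = 3 * e)%N by lia.
  by move=> j hj hne; rewrite hd; apply: ndvd4; lia.
have T2 : T (2 * e + 3)%N = T (2 * e - 3)%N.
  apply: T_inv; [lia | lia | ].
  rewrite hd; have -> : (2 * e + 3 + (2 * e - 3) + 2 * e = 2 * (3 * e))%N by lia.
  exact: dvdn_mull (dvdnn _).
have T3 : T (e + 3)%N = T (3 * e - 3)%N.
  apply: T_inv; [lia | lia | ].
  rewrite hd; have -> : (e + 3 + (3 * e - 3) + 2 * e = 2 * (3 * e))%N by lia.
  exact: dvdn_mull (dvdnn _).
have T4 : T (e - 3)%N = 0 by apply: T_zero' => j hj; lia.
have T5 : T 3 = 0 by apply: T_zero' => j hj; lia.
have T6 : T (3 * e + 3)%N = 0 by apply: T_zero' => j hj; lia.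
have Z1 : Z (3 * e - 3)%N = ('C(e, 3))%:R.
  rewrite (@Z_one (3 * e - 3)%N (e - 3)%N he0); [ | lia | lia | move=> i hi hne; lia].
  rewrite bin_sub; last lia.
  have -> : (e - 3 = (3 * t - 2).*2.+1)%N by lia.
  by rewrite sgnO mulNrn opprK.
have Z2 : Z (2 * e + 3)%N = ('C(e, 3))%:R.
  rewrite (@Z_one (2 * e + 3)%N 3 he0); [ | lia | lia | move=> i hi hne; lia].
  by rewrite (sgnO _ 1) mulNrn opprK.
have Z3 : Z (2 * e - 3)%N = 0 by apply: Z_zero => i hi; lia.
have Z4 : Z (e - 3)%N = 0 by apply: Z_zero => i hi; lia.
have Z5 : Z (e + 3)%N = 0 by apply: Z_zero => i hi; lia.
have Z6 : Z 3 = 0 by apply: Z_zero => i hi; lia.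
have Z7 : Z (3 * e + 3)%N = 0 by apply: Z_zero => i hi; lia.
rewrite U1 U2 U3 U4 U5 U6 U7 T2 T3 T1 T4 T5 T6 Z1 Z2 Z3 Z4 Z5 Z6 Z7 in S0.
have H : (9 : F) * ((2 * 'C(e, 3) + e * e.-1)%:R) = 0.
  rewrite -S0 !natrD !natrM; ring.
have hC3 : ('C(e, 3) * 6 = e * (e.-1 * e.-2))%N.
  by have := bin_ffact e 3; rewrite !ffactnS ffactn0 muln1.
have N : (9 * (9 * (2 * 'C(e, 3) + e * e.-1)) = (3 * e) * (3 * e - 3) * (3 * e + 3))%N.
  have [k ek3] : exists k, e = k.+3 by exists (e - 3)%N; lia.
  have -> : (3 * e - 3 = 3 * k.+2)%N by lia.
  move: hC3; rewrite ek3 /= => hC3.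
  have -> : (9 * (9 * (2 * 'C(k.+3, 3) + k.+3 * k.+2)) =
    27 * ('C(k.+3, 3) * 6) + 81 * (k.+3 * k.+2))%N by ring.
  rewrite hC3; ring.
rewrite -hd in N.
move/(congr1 (fun n : nat => n%:R : F)): N.
rewrite natrM (natrM _ 9) H mulr0 !natrM natrD natrB; last by rewrite hd; lia.
rewrite natr_predq => h.
have h8 : (2%:R : F) ^+ 3 = (-1) * (-1 - 3%:R) * (-1 + 3%:R) by ring.
rewrite -h in h8; move/eqP: h8; rewrite expf_eq0 /=.
by rewrite (negbTE two).
Qed.

End Om.

Theorem theorem2p4 (F : finFieldType) :
  odd #|F| -> (#|F| %% 3 = 1)%N -> (261 < #|F|)%N ->
  exists gamma : F, ~ exists alpha beta : F,
    mpotent ((#|F| + 2) %/ 3)%N alpha /\ mpotent 4 beta /\ gamma = alpha + beta.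
Proof.
move=> hodd h3 hbig.
set e := (#|F| %/ 3)%N.
have hq : #|F| = (3 * e).+1 by rewrite /e; lia.
have hn : ((#|F| + 2) %/ 3 = e.+1)%N by rewrite hq; lia.
have he : (87 <= e)%N by lia.
have hd : #|F|.-1 = (3 * e)%N by rewrite hq.
have ev : ~~ odd e by move: hodd; rewrite hq /= oddM.
have two : (2%:R : F) != 0.
  apply/eqP => h2; have := natr_card (F := F).
  rewrite -(odd_double_half #|F|) hodd natrD -mul2n natrM h2 mul0r addr0 => /eqP.
  by rewrite oner_eq0.
have [y /andP[ny hy]] : exists y : F, (y != 0) && (y ^+ e != 1).
  by apply: exists_nonroot; rewrite hd; lia.
set w := y ^+ e.
have hw : w ^+ 2 + w + 1 = 0.
  have w3 : w ^+ 3 = 1 by rewrite /w -exprM mulnC -hd unit_pow.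
  have : (w - 1) * (w ^+ 2 + w + 1) = 0.
    have -> : (w - 1) * (w ^+ 2 + w + 1) = w ^+ 3 - 1 by ring.
    by rewrite w3 subrr.
  by move/eqP; rewrite mulf_eq0 subr_eq0 (negbTE hy) /= => /eqP.
apply: NNPP => Hn.
have HP : forall x : F, (x ^+ 4 - x) * G F e w x = 0.
  move=> x.
  have [a [b [ha [hb hx]]]] : exists a b : F,
      mpotent ((#|F| + 2) %/ 3)%N a /\ mpotent 4 b /\ x = a + b.
    by apply: NNPP => H; apply: Hn; exists x.
  rewrite /mpotent hn in ha; rewrite /mpotent in hb.
  have fz : forall z : F, z = a -> z * (z ^+ e - 1) = 0.
    by move=> z ->; rewrite mulrBr mulr1 -exprS ha subrr.
  have key : (x ^+ 4 - x) * G F e w x =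
    (x * (x ^+ e - 1)) * ((x - 1) * ((x - 1) ^+ e - 1)) *
    ((x - w) * ((x - w) ^+ e - 1)) * ((x - w ^+ 2) * ((x - w ^+ 2) ^+ e - 1)).
    have -> : x ^+ 4 - x = x * (x - 1) * (x - w) * (x - w ^+ 2).
      by apply: (@via_hw F w hw _ _ (- x + x * w - x ^+ 2 * w + x ^+ 3)); ring.
    rewrite /G.
    move: (x ^+ e) ((x - 1) ^+ e) ((x - w) ^+ e) ((x - w ^+ 2) ^+ e) => A B C D; ring.
  have hb0 : b * (b - 1) * (b - w) * (b - w ^+ 2) = 0.
    have -> : b * (b - 1) * (b - w) * (b - w ^+ 2) = b ^+ 4 - b.
      by symmetry; apply: (@via_hw F w hw _ _ (- b + b * w - b ^+ 2 * w + b ^+ 3)); ring.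
    by rewrite hb subrr.
  rewrite key; move/eqP: hb0; rewrite !mulf_eq0 !subr_eq0.
  case/orP=> [/orP[/orP[|]|]|] /eqP hbv.
  - by rewrite (fz x); [rewrite ?mulr0 ?mul0r | rewrite hx hbv addr0].
  - by rewrite (fz (x - 1)); [rewrite ?mulr0 ?mul0r | rewrite hx hbv addrK].
  - by rewrite (fz (x - w)); [rewrite ?mulr0 ?mul0r | rewrite hx hbv addrK].
  - by rewrite (fz (x - w ^+ 2)); [rewrite ?mulr0 ?mul0r | rewrite hx hbv addrK].
have [d3|nd3] := boolP (3 %| e)%N.
  exact: (@caseB F e w hq hw he ev d3 two HP).
exact: (@caseA F e w hq hw he ev nd3 two HP).
Qed.
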